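(* Let $G$ be a finite graph with ordered edges and let $H^i(G)$ be the cohomology of its chain complex $\mathcal{C}(G)$ (defined in the context). Then $$\sum_{i\ge 0}(-1)^i\, q\dim H^i(G) \;=\; P_G(1+q),$$ where $P_G(\lambda)$ is the chromatic polynomial of $G$.
   Context: Graphs are finite; loops and multiple edges are allowed. $P_G(\lambda)$ is the chromatic polynomial: for a positive integer $\lambda$, $P_G(\lambda)$ is the number of assignments of colors $\{1,\dots,\lambda\}$ to vertices such that the endpoints of every edge receive different colors (equivalently $P_G(\lambda)=\sum_{s\subseteq E}(-1)^{|s|}\lambda^{k(s)}$, $k(s)$ the number of components of $[G:s]$). For a graded $\mathbb{Z}$-module $\mathcal{M}=\bigoplus_j M_j$, $q\dim\mathcal{M}=\sum_j q^j\operatorname{rank}(M_j)$ with $\operatorname{rank}(M_j)=\dim_{\mathbb{Q}}(M_j\otimes\mathbb{Q})$. For $G=(V,E)$ and $s\subseteq E$, $[G:s]$ is the spanning subgraph with edge set $s$. With $1*1=1$, $1*x=x*1=x$, $x*x=0$: an enhanced state is $S=(s,c)$, $s\subseteq E$, $c$ assigning $1$ or $x$ to each component of $[G:s]$; $i(S)=|s|$, $j(S)=$ number of components colored $x$. $C^{i,j}(G)$ is free abelian on enhanced states with $i(S)=i,j(S)=j$; $C^i(G)=\bigoplus_jC^{i,j}(G)$ graded by $j$. For an ordering of the edges, $d(S)=\sum_{e\in E\setminus s}(-1)^{n(e)}S_e$, $n(e)$ the number of edges of $s$ before $e$; $S_e=(s\cup\{e\},c_e)$ where, if $e$ joins a component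 to itself, colors are unchanged, and if $e$ joins distinct components $E_1,E_2$ the merged component gets $c(E_1)*c(E_2)$ (and $S_e=0$ if this product is $0$). $H^{i,j}(G)$ is the cohomology of $(C^{\bullet,j}(G),d)$ and $H^i(G)=\bigoplus_j H^{i,j}(G)$, graded by $j$. *)

(* Defs.v *)
From HB Require Import structures.
From mathcomp Require Import all_boot all_order all_algebra.
Set Implicit Arguments. Unset Strict Implicit. Unset Printing Implicit Defensive.
Import GRing.Theory Num.Theory.
Local Open Scope ring_scope.

(* A finite graph (loops and multiple edges allowed): a finite vertex type V,
   m edges indexed by 'I_m (this index order is the edge ordering), and
   ends e = the pair of endpoints of edge e. *)
Section Chromatic.
Variables (V : finType) (m : nat) (ends : 'I_m -> V * V).

Definition adj (s : {set 'I_m}) : rel V := fun x y =>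
  [exists e in s, (((ends e).1 == x) && ((ends e).2 == y))
               || (((ends e).1 == y) && ((ends e).2 == x))].

Definition comp (s : {set 'I_m}) (v : V) : {set V} := [set w | connect (adj s) v w].
Definition comps (s : {set 'I_m}) : {set {set V}} := comp s @: setT.
Definition ncomp (s : {set 'I_m}) : nat := #|comps s|.

Definition chrom_poly : {poly int} :=
  \sum_(s : {set 'I_m}) ((-1) ^+ #|s|) *: 'X^(ncomp s).

(* An enhanced state (s, c) is encoded as (s, K) where K is the set of
   components of [G:s] colored x (the others are colored 1). *)
Definition estate := ({set 'I_m} * {set {set V}})%type.
Definition valid (S : estate) : bool := S.2 \subset comps S.1.
Definition deg_i (S : estate) : nat := #|S.1|.
Definition deg_j (S : estate) : nat := #|S.2|.

Definition sign_e (s : {set 'I_m}) (e : 'I_m) : int :=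
  (-1) ^+ #|[set f in s | (val f < val e)%N]|.

(* S_e ; None stands for S_e = 0 *)
Definition Se (S : estate) (e : 'I_m) : option estate :=
  let s := S.1 in let K := S.2 in
  let u := (ends e).1 in let v := (ends e).2 in
  let s' := e |: s in
  if connect (adj s) u v then Some (s', K)
  else match comp s u \in K, comp s v \in K with
       | false, false => Some (s', K)                 (* 1 * 1 = 1 *)
       | true, true => None                           (* x * x = 0 *)
       | _, _ => Some (s', (K :\ comp s u :\ comp s v) :|: [set comp s' u])
                                                      (* 1 * x = x * 1 = x *)
       end.

(* enumeration of all (possibly invalid) pairs, used as matrix indices *)
Definition NS : nat := #|{: estate}|.
Definition st (a : 'I_NS) : estate := enum_val a.

(* the differential d over Z, as a matrix acting on row vectors:
   row S is d(S) in the basis of enhanced states (zero row for non-states) *)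
Definition dmx : 'M[int]_NS := \matrix_(a, b)
  if valid (st a) then
    \sum_(e : 'I_m | e \notin (st a).1)
       (if Se (st a) e == Some (st b) then sign_e (st a).1 e else 0)
  else 0.

Definition dQ : 'M[rat]_NS := map_mx (fun z : int => (z%:~R : rat)) dmx.

(* the subspace C^{i,j}(G) (x) Q, as the row space of a diagonal projector *)
Definition proj (i j : nat) : 'M[rat]_NS :=
  diag_mx (\row_a (if valid (st a) && (deg_i (st a) == i) && (deg_j (st a) == j)
                   then 1 else 0)).

Definition cocycles (i j : nat) : 'M[rat]_NS := (proj i j :&: kermx dQ)%MS.
Definition coboundaries (i j : nat) : 'M[rat]_NS :=
  if i is i'.+1 then (proj i' j *m dQ)%R else 0.

(* rank H^{i,j}(G) = dim_Q (H^{i,j}(G) (x) Q) = dim_Q of the cohomology of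
   the rationalized complex (Q is flat over Z); a complement of the
   coboundaries inside the cocycles has the dimension of the quotient. *)
Definition cohom_rank (i j : nat) : nat :=
  \rank (cocycles i j :\: coboundaries i j)%MS.

(* q dim H^i(G); j ranges over 0..|V| (j(S) <= number of components <= |V|) *)
Definition qdimH (i : nat) : {poly int} :=
  \sum_(j < #|V|.+1) (cohom_rank i j)%:R *: 'X^j.

End Chromatic.

(* Main.v *)
Require Import Defs.
From HB Require Import structures.
From mathcomp Require Import all_boot all_order all_algebra.
From mathcomp Require Import zify.
Set Implicit Arguments. Unset Strict Implicit. Unset Printing Implicit Defensive.
Import GRing.Theory.
Section Graph.
Variables (V : finType) (m : nat) (ends : 'I_m -> V * V).
Local Notation adj := (adj ends).
Local Notation comp := (Defs.comp ends).
Local Notation comps := (comps ends).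
Local Notation Se := (Se ends).
Local Notation valid := (valid ends).

Lemma adj_sym s : symmetric (adj s).
Proof. by move=> x y; apply/existsP/existsP=> -[e He]; exists e; rewrite orbC. Qed.

Lemma csym s : connect_sym (adj s).
Proof. exact/sym_connect_sym/adj_sym. Qed.

Lemma mem_comp s v w : (w \in comp s v) = connect (adj s) v w.
Proof. by rewrite inE. Qed.

Lemma comp_eq s v w : (comp s v == comp s w) = connect (adj s) v w.
Proof.
apply/eqP/idP => [E|C].
  have H : v \in comp s w by rewrite -E mem_comp connect0.
  by rewrite mem_comp csym in H.
apply/setP=> x; rewrite !mem_comp; by rewrite (same_connect (csym s) C).
Qed.

Lemma compsP s C : reflect (exists v, C = comp s v) (C \in comps s).
Proof.
apply: (iffP imsetP) => [[v _ ->]|[v ->]]; first by exists v.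
by exists v.
Qed.

Lemma connect_mono (s t : {set 'I_m}) : s \subset t -> subrel (connect (adj s)) (connect (adj t)).
Proof.
move=> st; apply: connect_sub => x y /existsP[e /andP[es H]]; apply: connect1.
by apply/existsP; exists e; rewrite (subsetP st e es).
Qed.

Lemma sub_comp (s t : {set 'I_m}) a b : s \subset t ->
  (comp s a \subset comp t b) = connect (adj t) b a.
Proof.
move=> st; apply/subsetP/idP => [H|C x].
  by move: (H a); rewrite !mem_comp connect0 => /(_ isT).
by rewrite !mem_comp => /(connect_mono st); apply: connect_trans.
Qed.

Section AddEdge.
Variables (s : {set 'I_m}) (e : 'I_m).
Let u := (ends e).1.
Let v := (ends e).2.
Definition inU x := connect (adj s) x u || connect (adj s) x v.

Lemma inU_conn x y : connect (adj s) x y -> inU x = inU y.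
Proof.
move=> C; rewrite /inU.
have C' : connect (adj s) y x by rewrite csym.
apply/orP/orP => -[H|H].
- by left; apply: connect_trans C' H.
- by right; apply: connect_trans C' H.
- by left; apply: connect_trans C H.
- by right; apply: connect_trans C H.
Qed.

Lemma connect_add x y :
  connect (adj (e |: s)) x y = connect (adj s) x y || (inU x && inU y).
Proof.
have sub : s \subset e |: s by apply: subsetUr.
have Euv : connect (adj (e |: s)) u v.
  by apply: connect1; apply/existsP; exists e; rewrite setU11 !eqxx.
have toU z : inU z -> connect (adj (e |: s)) z u.
  case/orP => H; first exact: connect_mono sub _ _ H.
  apply: connect_trans (connect_mono sub H) _; by rewrite csym.
apply/idP/idP; last first.
  case/orP => [H|/andP[hx hy]]; first exact: connect_mono sub _ _ H.
  by apply: connect_trans (toU _ hx) _; rewrite csym; apply: toU.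
case/connectP => p; elim: p x => [|z p IH] x /=.
  by move=> _ ->; rewrite connect0.
case/andP => axz /IH {}IH /IH {IH}.
have Rxz : connect (adj s) x z || (inU x && inU z).
  case/existsP: axz => f /andP[]; rewrite !inE => /orP[/eqP ->|fs] H.
    by rewrite /inU -/u -/v; case/orP: H => /andP[/eqP <- /eqP <-];
       rewrite !connect0 ?orbT.
  by apply/orP; left; apply: connect1; apply/existsP; exists f; rewrite fs.
case/orP: Rxz => [Cxz|/andP[hx hz]] /orP[Czy|/andP[hz' hy]].
- by rewrite (connect_trans Cxz Czy).
- by rewrite (inU_conn Cxz) hz' hy orbT.
- by rewrite -(inU_conn Czy) hz hx orbT.
- by rewrite hx hy orbT.
Qed.

Lemma comp_add x :
  comp (e |: s) x = if inU x then comp s u :|: comp s v else comp s x.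
Proof.
apply/setP => y; rewrite mem_comp connect_add; case: ifP => hx.
  rewrite /= !inE.
  case Cxy: (connect (adj s) x y) => /=; last by rewrite /inU !(csym s y).
  by move: hx; rewrite (inU_conn Cxy) /inU !(csym s y).
by rewrite andFb orbF mem_comp.
Qed.

Lemma inU_comp a : inU a = (comp s a == comp s u) || (comp s a == comp s v).
Proof. by rewrite !comp_eq. Qed.

End AddEdge.

Definition coll (K : {set {set V}}) (t : {set 'I_m}) : bool :=
  [exists C in comps t, exists D1 in K, exists D2 in K,
     [&& D1 != D2, D1 \subset C & D2 \subset C]].

Lemma collP (K : {set {set V}}) (t : {set 'I_m}) : reflect (exists C D1 D2, [/\ C \in comps t, D1 \in K, D2 \in K,
   D1 != D2 & (D1 \subset C) && (D2 \subset C)]) (coll K t).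
Proof.
apply: (iffP idP).
  case/exists_inP => C HC /exists_inP[D1 H1 /exists_inP[D2 H2 /and3P[a b c]]].
  by exists C, D1, D2; rewrite b c.
case=> C [D1 [D2 [HC H1 H2 a /andP[b c]]]].
apply/exists_inP; exists C => //; apply/exists_inP; exists D1 => //.
by apply/exists_inP; exists D2 => //; rewrite a b c.
Qed.

Definition mres (K : {set {set V}}) (t : {set 'I_m}) : {set {set V}} :=
  [set C in comps t | [exists D in K, D \subset C]].

Definition mrg (S : estate V m) (t : {set 'I_m}) : option (estate V m) :=
  if coll S.2 t then None else Some (t, mres S.2 t).

Lemma mresP (K : {set {set V}}) (t : {set 'I_m}) (Y : {set V}) : reflect (Y \in comps t /\ exists2 D, D \in K & D \subset Y) (Y \in mres K t).
Proof.
rewrite inE; apply: (iffP andP) => [[a /exists_inP[D b c]]|[a [D b c]]].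
  by split => //; exists D.
by split => //; apply/exists_inP; exists D.
Qed.

Section AddEdge2.
Variables (s : {set 'I_m}) (e : 'I_m) (K : {set {set V}}).
Hypothesis vK : K \subset comps s.
Let u := (ends e).1.
Let v := (ends e).2.
Let cu := comp s u.
Let cv := comp s v.
Let s' := e |: s.
Let ss' : s \subset s'. Proof. exact: subsetUr. Qed.

Lemma inUu : inU s e u. Proof. by rewrite /inU connect0. Qed.
Lemma inUv : inU s e v. Proof. by rewrite /inU connect0 orbT. Qed.

Lemma Kcomp (D : {set V}) : D \in K -> exists a, D = comp s a.
Proof. by move=> /(subsetP vK) /compsP. Qed.

Lemma key (Y : {set V}) : (Y \in mres K s') =
  ((Y == comp s' u) && ((cu \in K) || (cv \in K))) || [&& Y \in K, Y != cu & Y != cv].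
Proof.
apply/mresP/idP.
  case=> /compsP[x ->] [D DK]; case: (Kcomp DK) => a Da; rewrite Da in DK *.
  rewrite sub_comp // connect_add => Hx.
  case hx : (inU s e x).
    rewrite !comp_add hx inUu eqxx /=.
    have ha : inU s e a.
      by case/orP: Hx => [C|/andP[_ ->]] //; rewrite -(inU_conn e C).
    have ha' : (comp s a == cu) || (comp s a == cv) by rewrite -inU_comp.
    by case/orP: ha' => /eqP E; rewrite -E DK ?orbT.
  rewrite hx /= orbF in Hx.
  have E : comp s x = comp s a by apply/eqP; rewrite comp_eq.
  rewrite comp_add hx E DK /= -E; apply/orP; right.
  by rewrite /cu /cv !comp_eq -/u -/v; move: hx; rewrite /inU; case/norP => -> ->.
case/orP.
  case/andP => /eqP -> H; split; first by apply/compsP; exists u.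
  case/orP: H => H; [exists cu | exists cv] => //; rewrite sub_comp //.
  by rewrite connect_add inUu inUv orbT.
case/and3P => YK Yu Yv; case: (Kcomp YK) => a Ya.
have ha : inU s e a = false by apply/negbTE; rewrite inU_comp -Ya negb_or Yu Yv.
split; last by exists Y.
by apply/compsP; exists a; rewrite comp_add ha.
Qed.

Lemma coll_add : coll K s' = [&& cu \in K, cv \in K & ~~ connect (adj s) u v].
Proof.
apply/collP/idP.
  case=> C [D1 [D2 [/compsP[x ->] H1 H2 N /andP[S1 S2]]]].
  case: (Kcomp H1) => a1 E1; case: (Kcomp H2) => a2 E2.
  rewrite E1 E2 !sub_comp // !connect_add in S1 S2.
  case hx : (inU s e x); last first.
    rewrite hx /= !orbF in S1 S2; case/negP: N.
    by rewrite E1 E2 comp_eq (connect_trans _ S2) // csym.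
  have h1 : inU s e a1 by case/orP: S1 => [C1|/andP[_ ->]] //; rewrite -(inU_conn e C1).
  have h2 : inU s e a2 by case/orP: S2 => [C1|/andP[_ ->]] //; rewrite -(inU_conn e C1).
  rewrite !inU_comp -E1 -E2 in h1 h2.
  case/orP: h1 => /eqP F1; case/orP: h2 => /eqP F2; rewrite F1 F2 in N H1 H2;
    rewrite ?eqxx // in N; rewrite H1 H2 /= -comp_eq; by [|rewrite eq_sym].
case/and3P => Hu Hv N; exists (comp s' u), cu, cv; split => //.
- by apply/compsP; exists u.
- by rewrite /cu /cv comp_eq.
by rewrite !sub_comp // connect0 connect_add inUu inUv orbT.
Qed.

Lemma Se_merge : Se (s, K) e = mrg (s, K) s'.
Proof.
rewrite /Se /mrg /= coll_add -/u -/v -/s'.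
case: ifP => c.
  rewrite /= !andbF; congr (Some (_, _)); apply/setP => Y; rewrite key.
  have cuv : cv = cu by apply/eqP; rewrite /cu /cv comp_eq csym.
  have cs'u : comp s' u = cu by rewrite comp_add inUu -/u -/v -/cu -/cv cuv setUid.
  rewrite cuv cs'u orbb; case: (eqVneq Y cu) => [->|]; by rewrite ?andbT ?andbF ?orbF.
rewrite -/cu -/cv.
case hu : (cu \in K); case hv : (cv \in K) => //=; congr (Some (_, _));
  apply/setP => Y; rewrite key hu hv /=.
- by rewrite in_setU in_set1 !in_setD1; case: (Y == comp s' u); case: (Y == cu); case: (Y == cv);
    rewrite /= ?andbT ?andbF ?orbF ?orbT.
- by rewrite in_setU in_set1 !in_setD1; case: (Y == comp s' u); case: (Y == cu); case: (Y == cv);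
    rewrite /= ?andbT ?andbF ?orbF ?orbT.
case YK : (Y \in K); rewrite andbF /= //; apply/esym/andP; split; apply/eqP => E;
  by rewrite E ?hu ?hv in YK.
Qed.

End AddEdge2.

Lemma comp_mem (s : {set 'I_m}) x a : a \in comp s x -> comp s x = comp s a.
Proof. by rewrite mem_comp -comp_eq => /eqP. Qed.

Lemma merge_trans (s t t' : {set 'I_m}) (K : {set {set V}}) :
  K \subset comps s -> s \subset t -> t \subset t' ->
  obind (fun S1 => mrg S1 t') (mrg (s, K) t) = mrg (s, K) t'.
Proof.
move=> vK st tt'; have st' := subset_trans st tt'.
rewrite /mrg /=; case: ifP => c1 /=.
  suff -> : coll K t' by [].
  case/collP: c1 => C [D1 [D2 [/compsP[b ->] H1 H2 N /andP[S1 S2]]]].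
  have CC : comp t b \subset comp t' b by rewrite sub_comp // connect0.
  apply/collP; exists (comp t' b), D1, D2; split => //; first by apply/compsP; exists b.
  by rewrite (subset_trans S1 CC) (subset_trans S2 CC).
have M2 : mres (mres K t) t' = mres K t'.
  apply/setP => Y; apply/mresP/mresP => -[YC [C CK CY]]; split => //.
    case/mresP: CK => _ [D DK DC]; exists D => //; exact: subset_trans DC CY.
  case/compsP: YC => b Yb; case/compsP: (subsetP vK _ CK) => a Ca.
  exists (comp t a).
    by apply/mresP; split; [apply/compsP; exists a | exists C => //; rewrite Ca sub_comp // connect0].
  by rewrite Yb sub_comp //; rewrite Yb Ca sub_comp // in CY.
have M1 : coll (mres K t) t' = coll K t'.
  apply/collP/collP => -[C [D1 [D2 [/compsP[b ->] H1 H2 N /andP[S1 S2]]]]].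
    case/mresP: H1 => /compsP[x1 Ex1] [F1 F1K F1D]; case/mresP: H2 => /compsP[x2 Ex2] [F2 F2K F2D].
    exists (comp t' b), F1, F2; split => //; first by apply/compsP; exists b.
      apply: contraNneq N => EF; case/compsP: (subsetP vK _ F1K) => a Ea.
      have a1 : a \in D1 by apply: (subsetP F1D); rewrite Ea mem_comp connect0.
      have a2 : a \in D2 by apply: (subsetP F2D); rewrite -EF Ea mem_comp connect0.
      by rewrite Ex1 Ex2 (comp_mem (_ : a \in comp t x1)) -?Ex1 // (comp_mem (_ : a \in comp t x2)) -?Ex2.
    by rewrite (subset_trans F1D S1) (subset_trans F2D S2).
  case/compsP: (subsetP vK _ H1) => a1 E1; case/compsP: (subsetP vK _ H2) => a2 E2.
  exists (comp t' b), (comp t a1), (comp t a2); split.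
  - by apply/compsP; exists b.
  - by apply/mresP; split; [apply/compsP; exists a1 | exists D1 => //; rewrite E1 sub_comp // connect0].
  - by apply/mresP; split; [apply/compsP; exists a2 | exists D2 => //; rewrite E2 sub_comp // connect0].
  - apply/negP => /eqP Heq; move/negbT: c1 => /negP; apply; apply/collP.
    exists (comp t a1), D1, D2; split => //; first by apply/compsP; exists a1.
    by rewrite E1 E2 !sub_comp // connect0 /= -comp_eq Heq.
  by rewrite !sub_comp //; rewrite E1 E2 !sub_comp // in S1 S2; rewrite S1 S2.
by rewrite M1 M2.
Qed.

Definition clos (t : {set 'I_m}) (D : {set V}) : {set V} :=
  [set x | [exists a in D, connect (adj t) a x]].

Lemma clos_comp (s t : {set 'I_m}) a : s \subset t -> clos t (comp s a) = comp t a.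
Proof.
move=> st; apply/setP => x; rewrite inE mem_comp; apply/exists_inP/idP.
  by case=> a' H1 H2; rewrite mem_comp in H1; apply: connect_trans (connect_mono st H1) H2.
by move=> H; exists a; rewrite ?mem_comp ?connect0.
Qed.

Lemma merge_card (s t : {set 'I_m}) (K : {set {set V}}) :
  K \subset comps s -> s \subset t -> ~~ coll K t -> #|mres K t| = #|K|.
Proof.
move=> vK st nc.
have -> : mres K t = clos t @: K.
  apply/setP => Y; apply/mresP/imsetP.
    case=> /compsP[b ->] [D DK]; case/compsP: (subsetP vK _ DK) => a Ea; subst D.
    rewrite sub_comp // => C; exists (comp s a) => //; rewrite clos_comp //.
    by apply/eqP; rewrite comp_eq.
  case=> D DK ->; case/compsP: (subsetP vK _ DK) => a Ea; subst D; rewrite clos_comp //.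
  by split; [apply/compsP; exists a | exists (comp s a) => //; rewrite sub_comp // connect0].
apply: card_in_imset => D1 D2 H1 H2 E; apply/eqP; apply: contraNT nc => N.
case/compsP: (subsetP vK _ H1) => a1 E1; case/compsP: (subsetP vK _ H2) => a2 E2.
apply/collP; exists (clos t D1), D1, D2; split => //.
  by rewrite E1 clos_comp //; apply/compsP; exists a1.
by rewrite {2}E E1 E2 !clos_comp // !sub_comp // !connect0.
Qed.

End Graph.
Import Num.Theory.
Local Open Scope ring_scope.
Section Mat.
Variables (V : finType) (m : nat) (ends : 'I_m -> V * V).
Local Notation comps := (comps ends).
Local Notation Se := (Se ends).
Local Notation valid := (valid ends).
Local Notation mrg := (mrg ends).
Local Notation dmx := (dmx ends).

Lemma Se_some (S T : estate V m) e : valid S -> Se S e = Some T ->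
  [/\ T.1 = e |: S.1, valid T & #|T.2| = #|S.2|].
Proof.
case: S => s K; rewrite /valid /= => vK; rewrite (Se_merge e vK) /mrg /=.
case: ifP => // nc [<-] /=; split => //.
  by apply/subsetP => Y /mresP[].
by rewrite (merge_card vK) ?subsetUr ?nc.
Qed.

Lemma Se2 (S : estate V m) e f : valid S ->
  obind (fun T => Se T f) (Se S e) = mrg S (f |: (e |: S.1)).
Proof.
case: S => s K; rewrite /valid /= => vK; rewrite (Se_merge e vK) -(merge_trans (t := e |: s) (t' := f |: (e |: s)) vK) ?subsetUr //.
case E: (mrg (s, K) (e |: s)) => [T|] //=.
move: E; rewrite /mrg; case: ifP => // _ [<-].
have vK' : mres ends K (e |: s) \subset comps (e |: s) by apply/subsetP => Y /mresP[].
by rewrite (Se_merge f vK').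
Qed.

Lemma Se_comm (S : estate V m) e f : valid S ->
  obind (fun T => Se T f) (Se S e) = obind (fun T => Se T e) (Se S f).
Proof. by move=> vS; rewrite !Se2 // setUCA. Qed.


Lemma sign_add (s : {set 'I_m}) f e : f \notin s ->
  sign_e (f |: s) e = (if (val f < val e)%N then -1 else 1) * sign_e s e.
Proof.
move=> fs; rewrite /sign_e; set A := [set g in s | (val g < val e)%N].
have fA : f \notin A by rewrite inE (negbTE fs).
have -> : [set g in f |: s | (val g < val e)%N] = if (val f < val e)%N then f |: A else A.
  apply/setP => g; rewrite !inE; case: (eqVneq g f) => [->|ngf] /=.
    by case: ifP => h; rewrite ?inE ?eqxx ?h // (negbTE fs).
  by case: ifP => _; rewrite ?inE ?(negbTE ngf).
by case: ifP => _; rewrite ?mul1r // cardsU1 fA exprD expr1.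
Qed.

Lemma sign_swap (s : {set 'I_m}) e f : e \notin s -> f \notin s -> e != f ->
  sign_e s f * sign_e (f |: s) e = - (sign_e s e * sign_e (e |: s) f).
Proof.
move=> es fs nef; rewrite !sign_add //.
case: (ltngtP (val f) (val e)) => h.
- by rewrite mulN1r mul1r mulrN mulrC.
- by rewrite mulN1r mul1r mulrN mulrC opprK.
by case/eqP: nef; apply: val_inj.
Qed.

Lemma st_eq (T : estate V m) (b : 'I_(NS V m)) : (Some T == Some (st b)) = (b == enum_rank T).
Proof.
rewrite /st; apply/eqP/eqP => [[->]|->]; by rewrite ?enum_valK ?enum_rankK.
Qed.

Lemma dmx2 : dmx *m dmx = 0.
Proof.
apply/matrixP => a c; rewrite !mxE.
set S := st a; set s := S.1.
case: (boolP (valid S)) => va; last first.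
  by rewrite big1 // => b _; rewrite mxE -/S (negbTE va) mul0r.
pose F e f := if [&& e \notin s, f \notin s & e != f] &&
     (obind (fun T => Se T f) (Se S e) == Some (st c))
   then sign_e s e * sign_e (e |: s) f else 0.
transitivity (\sum_e \sum_f F e f).
  rewrite (eq_bigr (fun b => \sum_(e | e \notin s)
     (if Some (st b) == Se S e then sign_e s e * dmx b c else 0))); last first.
    move=> b _; rewrite mxE -/S va big_distrl; apply: eq_bigr => e _.
    by rewrite (eq_sym (Some (st b))); case: ifP => _ /=; rewrite ?mul0r.
  rewrite exchange_big /= [LHS]big_mkcond; apply: eq_bigr => e _.
  case: ifP => es; last first.
    by rewrite big1 // => f _; rewrite /F es.
  case E: (Se S e) => [T|]; last first.
    rewrite big1 //; rewrite big1 // => f _; by rewrite /F E /= andbF.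
  case: (Se_some va E) => T1 vT _.
  rewrite (bigD1 (enum_rank T)) ?eqxx //= big1 ?addr0; last first.
    by move=> b /negbTE nb; rewrite eq_sym st_eq nb.
  rewrite mxE /st enum_rankK eqxx vT T1 mulr_sumr big_mkcond; apply: eq_bigr => f _.
  rewrite /F es E /= in_setU1 negb_or -/s /st.
  case: (eqVneq f e) => [->|nfe]; first by rewrite /= andbF /=.
  rewrite /= andbT; case: (f \in s) => //=.
  by case: ifP; rewrite ?mulr0.
set X := \sum_e _.
have FA e f : F f e = - F e f.
  rewrite /F (Se_comm f e va) eq_sym.
  case: (boolP [&& e \notin s, f \notin s & e != f]) => /= H.
    case/and3P: H => es fs nef; rewrite es fs nef /=.
    by case: ifP => _; rewrite ?oppr0 // sign_swap.
  have -> : [&& f \notin s, e \notin s & e != f] = false.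
    by apply/negbTE; apply: contra H => /and3P[-> -> ->].
  by rewrite oppr0.
have H : X = - X.
  rewrite {1}/X exchange_big /= -sumrN; apply: eq_bigr => f _.
  by rewrite -sumrN; apply: eq_bigr => e _; rewrite FA.
by move/eqP: H; rewrite -addr_eq0 -mulr2n mulrn_eq0 /= => /eqP.
Qed.


Lemma dmx_nz a b : dmx a b != 0 ->
  [/\ valid (st a), valid (st b), #|(st b).1| = (#|(st a).1|).+1 & #|(st b).2| = #|(st a).2|].
Proof.
rewrite mxE; case: ifP => // va nz.
have [e /andP[es /eqP E]] : exists e, (e \notin (st a).1) && (Se (st a) e == Some (st b)).
  apply/existsP; apply: contraNT nz => /existsPn H.
  by rewrite big1 // => e es; move: (H e); rewrite es /= => /negbTE ->.
case: (Se_some va E) => T1 vT CT; split => //.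
by rewrite T1 cardsU1 es.
Qed.

Lemma dQ_nz a b : dQ ends a b != 0 -> dmx a b != 0.
Proof. by rewrite mxE; apply: contraNneq => ->. Qed.

Lemma dQ2 : dQ ends *m dQ ends = 0.
Proof. by rewrite /dQ -map_mxM dmx2 map_mx0. Qed.

Definition pr i j (a : 'I_(NS V m)) : bool :=
  valid (st a) && (deg_i (st a) == i) && (deg_j (st a) == j).

Lemma projE i j : proj ends i j = diag_mx (\row_a (if pr i j a then 1 else 0)).
Proof. by []. Qed.

Lemma projdQ i j : proj ends i j *m dQ ends = (proj ends i j *m dQ ends) *m proj ends i.+1 j.
Proof.
apply/matrixP => a b; have HD := fun nz => dmx_nz (@dQ_nz a b nz).
move: (dQ ends) HD => D HD.
rewrite !projE mul_mx_diag mul_diag_mx !mxE.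
case: ifP => pa; last by rewrite !mul0r.
case: (eqVneq (D a b) 0) => [->|nz]; first by rewrite !mulr0 mul0r.
case: (HD nz) => va vb C1 C2.
move: pa; rewrite /pr /deg_i /deg_j => /andP[/andP[_ /eqP ha] /eqP hb].
by rewrite vb C1 C2 ha hb !eqxx mulr1.
Qed.

Lemma projmdQ j : proj ends m j *m dQ ends = 0.
Proof.
apply/matrixP => a b; have HD := fun nz => dmx_nz (@dQ_nz a b nz).
move: (dQ ends) HD => D HD.
rewrite projE mul_diag_mx !mxE.
case: ifP => pa; last by rewrite mul0r.
case: (eqVneq (D a b) 0) => [->|nz]; first by rewrite mulr0.
case: (HD nz) => va vb C1 C2.
move: pa; rewrite /pr /deg_i => /andP[/andP[_ /eqP ha] _].
have := max_card (mem (st b).1); rewrite card_ord C1 ha ltnn.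
by [].
Qed.

End Mat.

Lemma rank_diag (F : fieldType) n (d : 'rV[F]_n) :
  \rank (diag_mx d) = \sum_(i < n) (d 0 i != 0 : nat).
Proof.
elim: n d => [|n IH] d.
  by rewrite big_ord0; apply/eqP; rewrite -leqn0 rank_leq_row.
rewrite -[in LHS](hsubmxK (d : 'rV_(1 + n))).
set l := lsubmx (d : 'rV_(1 + n)); set r := rsubmx (d : 'rV_(1 + n)).
rewrite (diag_mx_row l r) (rank_diag_block_mx (diag_mx l) (diag_mx r)) IH.
rewrite big_ord_recl; congr addn.
  rewrite rank_rV; congr (nat_of_bool (~~ _)); apply/eqP/eqP.
    move/matrixP/(_ 0 0); rewrite !mxE eqxx mulr1n.
    by have -> : lshift n (0 : 'I_1) = ord0 :> 'I_(1 + n) by apply: val_inj.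
  move=> H; apply/matrixP => i j; rewrite !ord1 !mxE eqxx mulr1n.
  by have -> : lshift n (0 : 'I_1) = ord0 :> 'I_(1 + n) by apply: val_inj.
apply: eq_bigr => i _; rewrite mxE.
by have -> : rshift 1 i = lift ord0 i :> 'I_(1 + n) by apply: val_inj.
Qed.
Lemma telescope (f : nat -> int) n :
  \sum_(i < n) (-1) ^+ i * (f i.+1 + f i) = f 0%N - (-1) ^+ n * f n.
Proof.
elim: n => [|n IH]; first by rewrite big_ord0 expr0 mul1r subrr.
rewrite big_ord_recr /= IH exprS mulrDr; lia.
Qed.

Lemma expand1X (T : finType) (A : {set T}) :
  (1 + 'X : {poly int}) ^+ #|A| = \sum_(K : {set T} | K \subset A) 'X ^+ #|K|.
Proof.
have := @bigA_distr _ 0 1 *%R +%R T (fun i => if i \in A then ('X : {poly int}) else 0) (fun _ => 1).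
have -> : \prod_(i : T) ((if i \in A then ('X : {poly int}) else 0) + 1) = \prod_(i in A) ('X + 1).
  by rewrite [RHS]big_mkcond; apply: eq_bigr => i _; case: ifP; rewrite ?add0r.
rewrite prodr_const addrC => ->; rewrite [RHS]big_mkcond; apply: eq_bigr => J _.
case: ifP => JA.
  rewrite (bigID (mem J)) /= (eq_bigr (fun=> 'X)) => [|i iJ]; last by rewrite iJ (subsetP JA i iJ).
  by rewrite prodr_const big1 ?mulr1 // => i /negbTE ->.
have [i /andP[iJ iA]] : exists i, (i \in J) && (i \notin A).
  by apply/existsP; apply: contraFT JA => /existsPn H; apply/subsetP => x xJ; move: (H x); rewrite xJ /= negbK.
by rewrite (bigD1 i) //= iJ (negbTE iA) mul0r.
Qed.

Section Main.
Variables (V : finType) (m : nat) (ends : 'I_m -> V * V).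

Lemma cob_sub i j : (coboundaries ends i j <= cocycles ends i j)%MS.
Proof.
case: i => [|i] /=; first exact: sub0mx.
rewrite sub_capmx; apply/andP; split.
  by rewrite projdQ submxMl.
by rewrite sub_kermx -mulmxA dQ2 mulmx0.
Qed.

Lemma cohom_int i j : ((cohom_rank ends i j)%:R : int) =
  (\rank (proj ends i j))%:R - (\rank (coboundaries ends i.+1 j))%:R
  - (\rank (coboundaries ends i j))%:R.
Proof.
have h1 := mxrank_cap_compl (cocycles ends i j) (coboundaries ends i j).
move/capmx_idPr: (cob_sub i j) => e; rewrite e in h1.
have h2 := mxrank_mul_ker (proj ends i j) (dQ ends).
change (proj ends i j *m dQ ends) with (coboundaries ends i.+1 j) in h2.
change (proj ends i j :&: kermx (dQ ends))%MS with (cocycles ends i j) in h2.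
rewrite /cohom_rank !natz; lia.
Qed.


Lemma alt_sum j : \sum_(i < m.+1) (-1) ^+ i * ((cohom_rank ends i j)%:R : int) =
  \sum_(i < m.+1) (-1) ^+ i * (\rank (proj ends i j))%:R.
Proof.
pose f i := ((\rank (coboundaries ends i j))%:R : int).
have -> : \sum_(i < m.+1) (-1) ^+ i * ((cohom_rank ends i j)%:R : int) =
   \sum_(i < m.+1) ((-1) ^+ i * (\rank (proj ends i j))%:R - (-1) ^+ i * (f i.+1 + f i)).
  by apply: eq_bigr => i _; rewrite cohom_int /f !mulrBr mulrDr opprD addrA.
rewrite sumrB telescope /f /= mxrank0 projmdQ mxrank0 mulr0 subrr subr0.
by [].
Qed.

Lemma rank_proj i j : ((\rank (proj ends i j))%:R : int) = \sum_a (pr ends i j a)%:R.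
Proof.
rewrite projE rank_diag natr_sum; apply: eq_bigr => a _; rewrite mxE.
by case: (pr ends i j a); rewrite ?oner_neq0 ?eqxx.
Qed.

End Main.

Lemma sum_pick (R : nmodType) n k (F : nat -> R) : (k < n)%N ->
  \sum_(i < n) (if k == i then F i else 0) = F k.
Proof.
move=> kn; rewrite (bigD1 (Ordinal kn)) //= eqxx big1 ?addr0 // => i ni.
case: eqP => // ki; case/eqP: ni; exact: val_inj.
Qed.

Section Final.
Variables (V : finType) (m : nat) (ends : 'I_m -> V * V).

Definition Gt (S : estate V m) : {poly int} := ((-1) ^+ #|S.1| : int) *: 'X ^+ #|S.2|.

Lemma inner j : (\sum_(i < m.+1) (-1) ^+ i * ((\rank (proj ends i j))%:R : int)) *: ('X ^+ j : {poly int})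
  = \sum_a \sum_(i < m.+1) (if pr ends i j a then ((-1) ^+ i : int) *: 'X ^+ j else 0).
Proof.
rewrite scaler_suml; under eq_bigr => i _ do rewrite rank_proj mulr_sumr scaler_suml.
rewrite exchange_big /=; apply: eq_bigr => a _; apply: eq_bigr => i _.
by case: (pr ends i j a); rewrite /= ?mulr1n ?mulr0n ?mulr1 ?mulr0 ?scale0r.
Qed.

Lemma card_s (S : estate V m) : (#|S.1| < m.+1)%N.
Proof. by rewrite ltnS; have := max_card (mem S.1); rewrite card_ord. Qed.

Lemma card_K (S : estate V m) : valid ends S -> (#|S.2| < #|V|.+1)%N.
Proof.
move=> vS; rewrite ltnS; apply: leq_trans (subset_leq_card vS) _.
by apply: leq_trans (leq_imset_card _ _) _; rewrite cardsT.
Qed.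

Lemma per_a a : \sum_(j < #|V|.+1) \sum_(i < m.+1)
   (if pr ends i j a then ((-1) ^+ i : int) *: ('X ^+ j : {poly int}) else 0)
   = if valid ends (st a) then Gt (st a) else 0.
Proof.
rewrite /pr /deg_i /deg_j; case: ifP => va /=; last first.
  by rewrite big1 // => j _; rewrite big1.
transitivity (\sum_(j < #|V|.+1) (if #|(st a).2| == j then
    ((-1) ^+ #|(st a).1| : int) *: ('X ^+ j : {poly int}) else 0)).
  apply: eq_bigr => j _.
  rewrite (eq_bigr (fun i : 'I_m.+1 => if #|(st a).1| == i then
     (if #|(st a).2| == j then ((-1) ^+ i : int) *: ('X ^+ j : {poly int}) else 0) else 0)); last first.
    by move=> i _; case: (#|(st a).1| == i); case: (#|(st a).2| == j).
  by rewrite (sum_pick (fun i => if #|(st a).2| == j then ((-1) ^+ i : int) *: ('X ^+ j : {poly int}) else 0) (card_s _)).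
by rewrite (sum_pick (fun j => ((-1) ^+ #|(st a).1| : int) *: ('X ^+ j : {poly int})) (card_K va)).
Qed.

End Final.

Theorem mainTheorem2 (V : finType) (m : nat) (ends : 'I_m -> V * V) :
  \sum_(i < m.+1) ((-1) ^+ i) *: qdimH ends i = chrom_poly ends \Po (1 + 'X).
Proof.
transitivity (\sum_(S | valid ends S) Gt S); last first.
  rewrite /chrom_poly raddf_sum /=.
  under [RHS]eq_bigr => s _ do rewrite comp_polyZ rmorphXn /= comp_polyX /ncomp expand1X scaler_sumr.
  by rewrite pair_big_dep /=.
rewrite /qdimH.
under eq_bigr => i _ do rewrite scaler_sumr.
rewrite exchange_big /=.
under eq_bigr => j _ do (under eq_bigr => i _ do rewrite scalerA; rewrite -scaler_suml alt_sum inner).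
rewrite exchange_big /=.
under eq_bigr => a _ do rewrite per_a.
rewrite -big_mkcond /= (reindex (@st V m)) //=.
by apply: onW_bij; exact: enum_val_bij.
Qed.
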